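(* Let $\varphi$ be an LDL$_F$ formula over a set of Boolean variables $X\cup Y$ ($X\cap Y=\emptyset$), and let $p,q$ be fresh Boolean variables. Let $\mathcal{G}_\varphi$ be the four-player iterated Boolean game with QPLDL$_F$ goals over $X\cup Y\cup\{p,q\}$ where Player 1 controls $X$ with goal $\gamma_1=\exists\varphi$; Player 2 controls $Y$ with goal $\gamma_2=\forall\neg\varphi$; Player 3 controls $p$ with goal $\gamma_3=\exists\varphi\vee(p\leftrightarrow q)$; Player 4 controls $q$ with goal $\gamma_4=\exists\varphi\vee\neg(p\leftrightarrow q)$. Then the synthesis problem for $\varphi$ in which the system controls $X$ and the environment controls $Y$ has a positive answer if and only if $\mathcal{G}_\varphi$ has a Nash equilibrium.
   Context: LDL$_F$ formulas over a finite set $\Phi$ of Boolean variables: $\varphi ::= p \mid \neg\varphi \mid \varphi\wedge\varphi \mid \varphi\vee\varphi \mid \langle\rho\rangle\varphi \mid [\rho]\varphi$, $\rho ::= \psi \mid \varphi? \mid \rho+\rho \mid \rho;\rho \mid \rho^*$ ($\psi$ propositional), with standard semantics over finite traces. For $\pi^\infty\in(2^\Phi)^\omega$: $\pi^\infty\models\exists\psi$ iff some finite prefix of $\pi^\infty$ satisfies $\psi$; $\pi^\infty\models\forall\psi$ iff every finite prefix satisfies $\psi$. In $\gamma_3,\gamma_4$ the disjunct $p\leftrightarrow q$ (resp. $\neg(p\leftrightarrow q)$) is evaluated on the play as an LDL$_F$ formula, i.e. it holds iff it holds in the first valuation of the play. Iterated Boolean game: players $N=\{1,\dots,n\}$, each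 controlling a part $\Phi_i$ of a partition of $\Phi$; strategies are finite state machines $\sigma_i=(S_i,s_i^0,\delta_i:S_i\times2^\Phi\to S_i,\tau_i:S_i\to2^{\Phi_i})$; a profile generates the play $\pi^\infty(\vec\sigma)=v_0v_1\cdots$, $v_t=\bigcup_i\tau_i(s_i^t)$, $s_i^{t+1}=\delta_i(s_i^t,v_t)$; $\vec\sigma$ is a Nash equilibrium if no player $i$ has a strategy $\sigma'_i$ with $\pi^\infty(\vec\sigma_{-i},\sigma'_i)\models\gamma_i$ and $\pi^\infty(\vec\sigma)\not\models\gamma_i$. The synthesis problem for $\varphi$ (system controls $X$, environment controls $Y$, both choosing their valuations simultaneously at each round) has a positive answer iff there is a finite-state strategy of the system (controlling $X$) such that for every finite-state strategy of the environment (controlling $Y$) the resulting infinite play has a finite prefix satisfying $\varphi$. *)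

(* Defs.v *)
From HB Require Import structures.
From mathcomp Require Import all_boot.
From Stdlib Require Import Relations.
Set Implicit Arguments. Unset Strict Implicit. Unset Printing Implicit Defensive.

Inductive pform (V : Type) : Type :=
| PVar : V -> pform V
| PNot : pform V -> pform V
| PAnd : pform V -> pform V -> pform V
| POr  : pform V -> pform V -> pform V.

Inductive ldl (V : Type) : Type :=
| LVar : V -> ldl V
| LNot : ldl V -> ldl V
| LAnd : ldl V -> ldl V -> ldl V
| LOr  : ldl V -> ldl V -> ldl V
| LDia : rexp V -> ldl V -> ldl V
| LBox : rexp V -> ldl V -> ldl V
with rexp (V : Type) : Type :=
| RProp : pform V -> rexp V
| RTest : ldl V -> rexp V
| RPlus : rexp V -> rexp V -> rexp V
| RSeq  : rexp V -> rexp V -> rexp V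
| RStar : rexp V -> rexp V.

Fixpoint pmap V W (f : V -> W) (p : pform V) : pform W :=
  match p with
  | PVar x => PVar (f x)
  | PNot a => PNot (pmap f a)
  | PAnd a b => PAnd (pmap f a) (pmap f b)
  | POr a b => POr (pmap f a) (pmap f b)
  end.

Fixpoint lmap V W (f : V -> W) (g : ldl V) {struct g} : ldl W :=
  match g with
  | LVar x => LVar (f x)
  | LNot a => LNot (lmap f a)
  | LAnd a b => LAnd (lmap f a) (lmap f b)
  | LOr a b => LOr (lmap f a) (lmap f b)
  | LDia r a => LDia (rmap f r) (lmap f a)
  | LBox r a => LBox (rmap f r) (lmap f a)
  end
with rmap V W (f : V -> W) (r : rexp V) {struct r} : rexp W :=
  match r with
  | RProp p => RProp (pmap f p)
  | RTest a => RTest (lmap f a)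
  | RPlus r1 r2 => RPlus (rmap f r1) (rmap f r2)
  | RSeq r1 r2 => RSeq (rmap f r1) (rmap f r2)
  | RStar r1 => RStar (rmap f r1)
  end.

Fixpoint peval (V : finType) (v : {set V}) (p : pform V) : bool :=
  match p with
  | PVar x => x \in v
  | PNot a => ~~ peval v a
  | PAnd a b => peval v a && peval v b
  | POr a b => peval v a || peval v b
  end.

(* Standard semantics (De Giacomo & Vardi): positions 0..last, last = size tr - 1;
   atoms are false beyond last; psi-steps go from i to i+1 for i <= last. *)
Fixpoint sat (V : finType) (tr : seq {set V}) (g : ldl V) (i : nat) {struct g} : Prop :=
  match g with
  | LVar x => i < size tr /\ x \in nth set0 tr i
  | LNot a => ~ sat tr a i
  | LAnd a b => sat tr a i /\ sat tr b i
  | LOr a b => sat tr a i \/ sat tr b i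
  | LDia r a => exists j, reach tr r i j /\ sat tr a j
  | LBox r a => forall j, reach tr r i j -> sat tr a j
  end
with reach (V : finType) (tr : seq {set V}) (r : rexp V) (i j : nat) {struct r} : Prop :=
  match r with
  | RProp p => j = i.+1 /\ i < size tr /\ peval (nth set0 tr i) p
  | RTest a => j = i /\ sat tr a i
  | RPlus r1 r2 => reach tr r1 i j \/ reach tr r2 i j
  | RSeq r1 r2 => exists k, reach tr r1 i k /\ reach tr r2 k j
  | RStar r1 => clos_refl_trans nat (fun a b => reach tr r1 a b) i j
  end.

Definition models (V : finType) (tr : seq {set V}) (g : ldl V) : Prop := sat tr g 0.

Inductive goal (V : Type) : Type :=
| GEx : ldl V -> goal V
| GAll : ldl V -> goal V
| GFirst : pform V -> goal V
| GNot : goal V -> goal V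
| GAnd : goal V -> goal V -> goal V
| GOr : goal V -> goal V -> goal V.

(* finite prefixes of a play are taken to be the nonempty ones, of length k+1 *)
Definition prefix (V : finType) (pl : nat -> {set V}) (k : nat) : seq {set V} :=
  mkseq pl k.+1.

Fixpoint gsat (V : finType) (pl : nat -> {set V}) (g : goal V) : Prop :=
  match g with
  | GEx f => exists k, models (prefix pl k) f
  | GAll f => forall k, models (prefix pl k) f
  | GFirst p => peval (pl 0) p
  | GNot a => ~ gsat pl a
  | GAnd a b => gsat pl a /\ gsat pl b
  | GOr a b => gsat pl a \/ gsat pl b
  end.

Record fsm (V : finType) := FSM {
  fstate : finType;
  finit : fstate;
  fdelta : fstate -> {set V} -> fstate;
  ftau : fstate -> {set V} }.

Definition fsm_for (V : finType) (C : {set V}) (s : fsm V) : Prop :=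
  forall x : fstate s, ftau x \subset C.

Definition controlled (N V : finType) (own : V -> N) (i : N) : {set V} :=
  [set x | own x == i].

Fixpoint states (N V : finType) (sg : N -> fsm V) (t : nat) : forall i : N, fstate (sg i) :=
  match t with
  | 0 => fun i => finit (sg i)
  | t'.+1 => fun i =>
      fdelta (states sg t' i) (\bigcup_(j : N) ftau (states sg t' j))
  end.

Definition play (N V : finType) (sg : N -> fsm V) (t : nat) : {set V} :=
  \bigcup_(j : N) ftau (states sg t j).

Definition upd (N V : finType) (sg : N -> fsm V) (i : N) (s : fsm V) : N -> fsm V :=
  fun j => if j == i then s else sg j.

Definition is_profile (N V : finType) (own : V -> N) (sg : N -> fsm V) : Prop :=
  forall j, fsm_for (controlled own j) (sg j).

Definition nash (N V : finType) (own : V -> N) (gam : N -> goal V) (sg : N -> fsm V) : Prop :=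
  is_profile own sg /\
  forall (i : N) (s : fsm V), fsm_for (controlled own i) s ->
    gsat (play (upd sg i s)) (gam i) -> gsat (play sg) (gam i).

Definition has_nash (N V : finType) (own : V -> N) (gam : N -> goal V) : Prop :=
  exists sg, nash own gam sg.

(* two-party game over X u Y: the system (true) controls X, the environment (false) controls Y *)
Definition syn_owner (X Y : finType) (v : (X + Y)%type) : bool :=
  if v is inl _ then true else false.

Definition realizable (X Y : finType) (phi : ldl (X + Y)) : Prop :=
  exists ss : fsm (X + Y)%type, fsm_for (controlled (@syn_owner X Y) true) ss /\
    forall se : fsm (X + Y)%type, fsm_for (controlled (@syn_owner X Y) false) se ->
      gsat (play (fun b : bool => if b then ss else se)) (GEx phi).

Definition gvar (X Y : finType) : finType := ((X + Y) + bool)%type.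
Definition pv (X Y : finType) : gvar X Y := inr true.
Definition qv (X Y : finType) : gvar X Y := inr false.

Definition pl1 : 'I_4 := @Ordinal 4 0 erefl.
Definition pl2 : 'I_4 := @Ordinal 4 1 erefl.
Definition pl3 : 'I_4 := @Ordinal 4 2 erefl.
Definition pl4 : 'I_4 := @Ordinal 4 3 erefl.

Definition gown (X Y : finType) (v : gvar X Y) : 'I_4 :=
  match v with
  | inl (inl _) => pl1
  | inl (inr _) => pl2
  | inr true => pl3
  | inr false => pl4
  end.

Definition piff V (a b : pform V) : pform V :=
  POr (PAnd a b) (PAnd (PNot a) (PNot b)).

Definition ggoal (X Y : finType) (phi : ldl (X + Y)) (i : 'I_4) : goal (gvar X Y) :=
  let phi' := lmap (@inl (X + Y)%type bool) phi in
  let pq := piff (PVar (pv X Y)) (PVar (qv X Y)) in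
  match val i with
  | 0 => GEx phi'
  | 1 => GAll (LNot phi')
  | 2 => GOr (GEx phi') (GFirst pq)
  | _ => GOr (GEx phi') (GFirst (PNot pq))
  end.

(* Main.v *)
Require Import Defs.
From mathcomp Require Import all_boot.
From Stdlib Require Import Relations.
Set Implicit Arguments. Unset Strict Implicit.

Scheme ldl_ind2 := Induction for ldl Sort Prop
with rexp_ind2 := Induction for rexp Sort Prop.
Combined Scheme ldl_rexp_ind from ldl_ind2, rexp_ind2.

Section Transfer.
Variables (V W : finType) (f : V -> W).
Definition prem (w : {set W}) : {set V} := [set v | f v \in w].

Lemma peval_map (w : {set W}) p : peval (prem w) p = peval w (Defs.pmap f p).
Proof. by elim: p => [x|a IH|a IHa b IHb|a IHa b IHb] /=; rewrite ?inE ?IH ?IHa ?IHb. Qed.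

Lemma crt_iff (R R' : relation nat) : (forall a b, R a b <-> R' a b) ->
  forall i j, clos_refl_trans nat R i j <-> clos_refl_trans nat R' i j.
Proof.
move=> H i j; split; elim=> [a b /H h|a|a b c _ h1 _ h2].
- exact: rt_step. - exact: rt_refl. - exact: rt_trans h1 h2.
- exact: rt_step. - exact: rt_refl. - exact: rt_trans h1 h2.
Qed.

Lemma sat_map_all :
  (forall g : ldl V, forall tr i, sat (map prem tr) g i <-> sat tr (lmap f g) i) /\
  (forall r : rexp V, forall tr i j, reach (map prem tr) r i j <-> reach tr (rmap f r) i j).
Proof.
apply: ldl_rexp_ind => /=.
- move=> x tr i; rewrite size_map; split=> -[Hi H]; split=> //;
  by move: H; rewrite (nth_map set0) // inE.
- move=> a IH tr i; split=> H1 H2; apply: H1; exact/IH.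
- move=> a IHa b IHb tr i; split=> -[h1 h2]; split; by [apply/IHa|apply/IHb].
- move=> a IHa b IHb tr i; split=> -[h|h]; by [left; apply/IHa|right; apply/IHb].
- move=> r IHr a IHa tr i; split=> -[j [h1 h2]]; exists j; split; by [apply/IHr|apply/IHa].
- move=> r IHr a IHa tr i; split=> H j h; apply/IHa; apply: H; exact/IHr.
- move=> p tr i j; rewrite size_map; split=> -[-> [Hi H]]; do 2!split=> //;
  by move: H; rewrite (nth_map set0) // peval_map.
- move=> a IH tr i j; split=> -[-> h]; split=> //; exact/IH.
- move=> r1 IH1 r2 IH2 tr i j; split=> -[h|h]; by [left; apply/IH1|right; apply/IH2].
- move=> r1 IH1 r2 IH2 tr i j; split=> -[k [h1 h2]]; exists k; split; by [apply/IH1|apply/IH2].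
- move=> r IH tr i j; apply: crt_iff => a b; exact: IH.
Qed.

Lemma gex_transfer (p2 : nat -> {set V}) (p4 : nat -> {set W}) (g : ldl V) :
  (forall t, p2 t = prem (p4 t)) ->
  gsat p2 (GEx g) <-> gsat p4 (GEx (lmap f g)).
Proof.
move=> H /=; have E k : Defs.prefix p2 k = map prem (Defs.prefix p4 k).
  by rewrite /Defs.prefix /mkseq -map_comp; apply: eq_map => t /=.
split=> -[k Hk]; exists k; move: Hk; rewrite /models E; apply sat_map_all.
Qed.
End Transfer.
Section Game.
Variables X Y : finType.
Notation G := (gvar X Y).
Notation XY := (X + Y)%type.
Definition restr (V : {set G}) : {set XY} := prem (@inl XY bool) V.
Definition ext (v : {set XY}) : {set G} := [set x | if x is inl u then u \in v else false].

Definition liftm (M : fsm XY) : fsm G :=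
  @FSM G (fstate M) (finit M) (fun s V => fdelta s (restr V)) (fun s => ext (ftau s)).

Definition Cm (m1 m3 m4 : fsm G) : fsm XY :=
  @FSM XY (fstate m1 * (fstate m3 * fstate m4))%type (finit m1, (finit m3, finit m4))
   (fun st v => let full := ext v :|: ftau st.2.1 :|: ftau st.2.2 in
      (fdelta st.1 full, (fdelta st.2.1 full, fdelta st.2.2 full)))
   (fun st => restr (ftau st.1)).

Definition U (sg : 'I_4 -> fsm G) (a : forall i, fstate (sg i)) : {set G} :=
  \bigcup_(j : 'I_4) ftau (a j).

Lemma own_mem (sg : 'I_4 -> fsm G) (prof : is_profile (@gown X Y) sg) j (s : fstate (sg j)) x :
  x \in ftau s -> gown x = j.
Proof. by move=> h; have := subsetP (prof j s) x h; rewrite inE => /eqP. Qed.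

Lemma mem_union_own (sg : 'I_4 -> fsm G) (prof : is_profile (@gown X Y) sg)
  (a : forall i, fstate (sg i)) x : (x \in U a) = (x \in ftau (a (gown x))).
Proof.
apply/bigcupP/idP => [[j _ h]|h]; last by exists (gown x).
by rewrite (own_mem prof h).
Qed.

Definition simrel (sg : 'I_4 -> fsm G) (k : 'I_4) (M : fsm XY) :=
  exists R : fstate M -> (forall i, fstate (sg i)) -> Prop,
    [/\ R (finit M) (fun i => finit (sg i)),
        (forall s a, R s a -> ftau s = restr (ftau (a k))) &
        (forall s a, R s a -> R (fdelta s (restr (U a))) (fun i => fdelta (a i) (U a)))].

Lemma play_sim (sg : 'I_4 -> fsm G) (prof : is_profile (@gown X Y) sg) (S E : fsm XY) :
  simrel sg pl1 S -> simrel sg pl2 E ->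
  forall t, play (fun b : bool => if b then S else E) t = restr (play sg t).
Proof.
move=> [RS [iS tS sS]] [RE [iE tE sE]].
set P2 := fun b : bool => _.
have taueq a : restr (ftau (a pl1)) :|: restr (ftau (a pl2)) = restr (@U sg a).
  apply/setP => v; rewrite !inE mem_union_own //.
  case: v => [x|y] /=.
  - case: (boolP (_ \in ftau (a pl2))) => [/(own_mem prof)/(congr1 val)//|]; by rewrite orbF.
  - case: (boolP (_ \in ftau (a pl1))) => [/(own_mem prof)/(congr1 val)//|] //.
have inv t : RS (states P2 t true) (states sg t) /\ RE (states P2 t false) (states sg t).
  elim: t => [|t [h1 h2]] //=.
  have eq : \bigcup_(j : bool) ftau (states P2 t j) = restr (U (states sg t)).
    by rewrite big_bool /= (tS _ _ h1) (tE _ _ h2) taueq.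
  by rewrite eq; split; [apply: sS|apply: sE].
move=> t; have [h1 h2] := inv t.
by rewrite /play big_bool /= (tS _ _ h1) (tE _ _ h2) taueq.
Qed.

Definition sim (M : fsm XY) (m : fsm G) :=
  exists R : fstate M -> fstate m -> Prop,
    [/\ R (finit M) (finit m), (forall s b, R s b -> ftau s = restr (ftau b)) &
        (forall s b V, R s b -> R (fdelta s (restr V)) (fdelta b V))].

Lemma sim_lift M : sim M (liftm M).
Proof.
exists eq; split=> //; last by move=> s b V ->.
by move=> s b -> /=; apply/setP => v; rewrite !inE.
Qed.

Lemma sim_simrel sg k M : sim M (sg k) -> simrel sg k M.
Proof.
move=> [R [i t s]]; exists (fun x a => R x (a k)); split=> //.
- by move=> x a /t.
- by move=> x a /s.
Qed.

Lemma full_eq (sg : 'I_4 -> fsm G) (prof : is_profile (@gown X Y) sg)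
  (a : forall i, fstate (sg i)) :
  ext (restr (U a)) :|: ftau (a pl3) :|: ftau (a pl4) = U a.
Proof.
apply/setP => x; rewrite !inE.
case: x => [v|[|]] /=.
- rewrite inE.
  case: (boolP (_ \in ftau (a pl3))) => [/(own_mem prof)|].
    by case: v => ? /(congr1 val).
  case: (boolP (_ \in ftau (a pl4))) => [/(own_mem prof)|].
    by case: v => ? /(congr1 val).
  by rewrite !orbF.
- rewrite mem_union_own //=.
  by case: (boolP (_ \in ftau (a pl4))) => [/(own_mem prof)/(congr1 val)|]; rewrite ?orbF.
- rewrite mem_union_own //=.
  by case: (boolP (_ \in ftau (a pl3))) => [/(own_mem prof)/(congr1 val)|]; rewrite ?orbF.
Qed.

Lemma Cm_simrel (sg : 'I_4 -> fsm G) (prof : is_profile (@gown X Y) sg) k :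
  simrel sg k (Cm (sg k) (sg pl3) (sg pl4)).
Proof.
exists (fun s a => s = (a k, (a pl3, a pl4))); split=> //.
- by move=> s a -> /=.
- by move=> s a -> /=; rewrite full_eq.
Qed.
End Game.
From Stdlib Require Import Classical.

Lemma upd_prof (N V : finType) (own : V -> N) sg i s :
  is_profile own sg -> fsm_for (controlled own i) s -> is_profile own (upd sg i s).
Proof. by move=> pr hs j; rewrite /upd; case: eqP => [->|]. Qed.

Section Main.
Variables (X Y : finType) (phi : ldl (X + Y)%type).
Notation G := (gvar X Y).
Notation XY := (X + Y)%type.

Lemma winA (sgA : 'I_4 -> fsm G) (ss : fsm XY) :
  is_profile (@gown X Y) sgA ->
  (forall se : fsm XY, fsm_for (controlled (@syn_owner X Y) false) se ->
      gsat (play (fun b : bool => if b then ss else se)) (GEx phi)) ->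
  sim ss (sgA pl1) -> gsat (play sgA) (GEx (lmap (@inl XY bool) phi)).
Proof.
move=> prof Hreal hsim.
set E := Cm (sgA pl2) (sgA pl3) (sgA pl4).
have HE : fsm_for (controlled (@syn_owner X Y) false) E.
  move=> st; apply/subsetP => v; rewrite !inE => /(own_mem prof).
  by case: v => // ? /(congr1 val).
have T := play_sim prof (sim_simrel hsim) (Cm_simrel prof pl2).
have := (gex_transfer phi T).1 (Hreal E HE).
exact.
Qed.

Lemma mem_play0 (sg : 'I_4 -> fsm G) (pr : is_profile (@gown X Y) sg) x :
  (x \in play sg 0) = (x \in ftau (finit (sg (gown x)))).
Proof. exact: (mem_union_own pr (fun i => finit (sg i)) x). Qed.

Theorem lemma2' : realizable phi <-> has_nash (@gown X Y) (ggoal phi).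
Proof.
split.
- move=> [ss [Hss Hreal]].
  pose triv : fsm G := @FSM G unit tt (fun _ _ => tt) (fun _ => set0).
  pose sg0 := fun j : 'I_4 => if val j == 0 then liftm ss else triv.
  have prof : is_profile (@gown X Y) sg0.
    move=> j; rewrite /sg0; case: ifP => /eqP hj s; apply/subsetP => x; rewrite !inE //.
    case: x => // u /(subsetP (Hss s)); rewrite inE; case: u => // ? _.
    by apply/eqP/val_inj; rewrite /= hj.
  exists sg0; split => // i s Hs.
  have prof' := upd_prof prof Hs.
  case: i Hs prof' => [[|[|[|[|n]]]] Hi] // Hs prof' /=.
  + move=> _; exact: winA prof Hreal (sim_lift ss).
  + move=> Hall; exfalso.
    have [k Hk] := winA prof' Hreal (sim_lift ss).
    exact: Hall k Hk.
  + move=> _; left; exact: winA prof Hreal (sim_lift ss).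
  + move=> _; left; exact: winA prof Hreal (sim_lift ss).
- move=> [sg [prof Hn]].
  apply: NNPP => Hnr.
  pose S := Cm (sg pl1) (sg pl3) (sg pl4).
  have HS : fsm_for (controlled (@syn_owner X Y) true) S.
    move=> st; apply/subsetP => v; rewrite !inE => /(own_mem prof).
    by case: v => // ? /(congr1 val).
  have [se [Hse Hng]] : exists se : fsm XY, fsm_for (controlled (@syn_owner X Y) false) se /\
      ~ gsat (play (fun b : bool => if b then S else se)) (GEx phi).
    apply: NNPP => Hno; apply: Hnr; exists S; split => // se Hse.
    apply: NNPP => Hg; apply: Hno; exists se; split => //.
  have Hl : fsm_for (controlled (@gown X Y) pl2) (liftm se).
    move=> s; apply/subsetP => x; rewrite !inE.
    case: x => // u /(subsetP (Hse s)); rewrite inE; case: u => //.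
  have prof2 := upd_prof prof Hl.
  have notex : ~ gsat (play sg) (GEx (lmap (@inl XY bool) phi)).
    move=> [k Hk].
    have Hall : gsat (play sg) (ggoal phi pl2).
      apply: (Hn pl2 (liftm se) Hl) => /= k' Hk'.
      apply: Hng.
    have hS : simrel (upd sg pl2 (liftm se)) pl1 S := Cm_simrel prof2 pl1.
    have hE : simrel (upd sg pl2 (liftm se)) pl2 se := @sim_simrel X Y (upd sg pl2 (liftm se)) pl2 se (sim_lift se).
    have T := play_sim prof2 hS hE.
    apply: ((gex_transfer phi T).2); by exists k'.
    exact: Hall k Hk.
  pose s3 : fsm G := @FSM G unit tt (fun _ _ => tt)
      (fun _ => if qv X Y \in ftau (finit (sg pl4)) then [set pv X Y] else set0).
  pose s4 : fsm G := @FSM G unit tt (fun _ _ => tt)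
      (fun _ => if pv X Y \in ftau (finit (sg pl3)) then set0 else [set qv X Y]).
  have H3 : fsm_for (controlled (@gown X Y) pl3) s3.
    move=> t; apply/subsetP => x /=; case: ifP => _; rewrite !inE // => /eqP -> //.
  have H4 : fsm_for (controlled (@gown X Y) pl4) s4.
    move=> t; apply/subsetP => x /=; case: ifP => _; rewrite !inE // => /eqP -> //.
  have p3 := upd_prof prof H3.
  have p4 := upd_prof prof H4.
  have := Hn pl3 s3 H3; have := Hn pl4 s4 H4.
  rewrite /= !mem_play0 //=.
  rewrite /upd /=.
  case: (qv X Y \in ftau (finit (sg pl4))); case: (pv X Y \in ftau (finit (sg pl3)));
   rewrite ?inE /= => h4 h3.
  all: have [/notex//|A4] := h4 (or_intror isT).
  all: have [/notex//|A3] := h3 (or_intror isT).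
  all: done.
Qed.
End Main.

Theorem lemma2 (X Y : finType) (phi : ldl (X + Y)%type) :
  realizable phi <-> has_nash (@gown X Y) (ggoal phi).
Proof. exact: lemma2'. Qed.
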